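(* Let $(\mathfrak g,\mathfrak g^* )$ be a Hom-Lie bialgebra, with Hom-Lie algebras $(\mathfrak{g},[\cdot,\cdot]_{\mathfrak{g}},\phi_{\mathfrak{g}})$ and $(\mathfrak g^*,[\cdot,\cdot]_{\mathfrak g^*},\phi_{\mathfrak g}^* )$. Then $(\mathfrak g\oplus\mathfrak g^*,[\cdot,\cdot]_d,\phi_{\mathfrak g}\oplus\phi_{\mathfrak g}^* )$, where $[x+a,y+b]_d=[x,y]_{\mathfrak g}+\mathrm{ad}^\circ_xb-\mathrm{ad}^\circ_ya+[a,b]_{\mathfrak g^*}+\mathfrak{ad}^\circ_ay-\mathfrak{ad}^\circ_bx$, is a weakly involutive Hom-Lie algebra.
   Context: $\mathfrak g$ is finite-dimensional. A Hom-Lie algebra $(\mathfrak{h},[\cdot,\cdot]_{\mathfrak{h}},\phi_{\mathfrak{h}})$: skew-symmetric bilinear bracket and linear map with $\phi_{\mathfrak h}[x,y]=[\phi_{\mathfrak h}x,\phi_{\mathfrak h}y]$ and $[\phi_{\mathfrak h}(x),[y,z]]+[\phi_{\mathfrak h}(y),[z,x]]+[\phi_{\mathfrak h}(z),[x,y]]=0$; weakly involutive if $[\phi_{\mathfrak h}^2(x),y]=[x,y]$. For $z\in\mathfrak g$, $t\in\mathfrak g\otimes\mathfrak g$: $\mathrm{ad}_zt=(\mathrm{ad}_z\otimes\phi_{\mathfrak g}+\phi_{\mathfrak g}\otimes\mathrm{ad}_z)t$, $\mathrm{ad}_zy=[z,y]_{\mathfrak g}$. A Hom-Lie bialgebra $(\mathfrak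 g,\mathfrak g^* )$ is a pair of weakly involutive Hom-Lie algebras $(\mathfrak{g},[\cdot,\cdot]_{\mathfrak{g}},\phi_{\mathfrak{g}})$ and $(\mathfrak g^*,[\cdot,\cdot]_{\mathfrak g^*},\phi_{\mathfrak g}^* )$ such that $\Delta:\mathfrak g\to\mathfrak g\otimes\mathfrak g$, $\langle\Delta(x),a\otimes b\rangle=\langle x,[a,b]_{\mathfrak g^*}\rangle$, satisfies $\Delta[x,y]_{\mathfrak g}=\mathrm{ad}_{\phi_{\mathfrak g}(x)}\Delta(y)-\mathrm{ad}_{\phi_{\mathfrak g}(y)}\Delta(x)$. $\mathrm{ad}^\circ_xa\in\mathfrak g^*$: $\langle\mathrm{ad}^\circ_xa,y\rangle=-\langle a,[\phi_{\mathfrak g}(x),y]_{\mathfrak g}\rangle$; $\mathfrak{ad}^\circ_ax\in\mathfrak g$: $\langle\mathfrak{ad}^\circ_ax,b\rangle=-\langle x,[\phi_{\mathfrak g}^*(a),b]_{\mathfrak g^*}\rangle$. *)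

(* Defs.v *)
(* g = K^n (finite-dimensional, coordinates 'rV[K]_n),
   g^* = K^n with the standard pairing <x,a> = \sum_i x_i a_i,
   g (x) g = 'M[K]_n with x (x) y := x^T *m y. *)
From HB Require Import structures.
From mathcomp Require Import all_boot all_order all_algebra.
Set Implicit Arguments. Unset Strict Implicit. Unset Printing Implicit Defensive.
Import GRing.Theory.
Local Open Scope ring_scope.

Definition HomLie (K : fieldType) (V : lmodType K)
    (br : V -> V -> V) (phi : V -> V) : Prop :=
  [/\ (forall (c : K) (x y z : V), br (c *: x + y) z = c *: br x z + br y z),
      (forall (c : K) (x y z : V), br z (c *: x + y) = c *: br z x + br z y),
      (forall x y : V, br x y = - br y x),
      (forall (c : K) (x y : V), phi (c *: x + y) = c *: phi x + phi y) &
      ((forall x y : V, phi (br x y) = br (phi x) (phi y)) /\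
      (forall x y z : V,
         br (phi x) (br y z) + br (phi y) (br z x) + br (phi z) (br x y) = 0))].

Definition weakly_involutive (K : fieldType) (V : lmodType K)
    (br : V -> V -> V) (phi : V -> V) : Prop :=
  forall x y : V, br (phi (phi x)) y = br x y.

Section Bialg.
Variables (K : fieldType) (n : nat).
Local Notation V := 'rV[K]_n.

Definition ev (i : 'I_n) : V := delta_mx 0 i.

Definition pairing (x a : V) : K := \sum_i x 0 i * a 0 i.

(* dual map phi^* : <phi^* a, x> = <a, phi x> *)
Definition dualmap (phi : V -> V) (a : V) : V :=
  \row_j pairing (phi (ev j)) a.

(* ad^o_x a : <ad^o_x a, y> = - <a, [phi x, y]_g> *)
Definition coadg (brg : V -> V -> V) (phi : V -> V) (x a : V) : V :=
  \row_j - pairing (brg (phi x) (ev j)) a.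

(* frak{ad}^o_a x : <frak{ad}^o_a x, b> = - <x, [phi^* a, b]_{g^*}> *)
Definition coads (brs : V -> V -> V) (phi : V -> V) (a x : V) : V :=
  \row_j - pairing x (brs (dualmap phi a) (ev j)).

Definition tens (x y : V) : 'M[K]_n := x^T *m y.

Definition tmap (f h : V -> V) (t : 'M[K]_n) : 'M[K]_n :=
  \sum_i \sum_j t i j *: tens (f (ev i)) (h (ev j)).

Definition adT (brg : V -> V -> V) (phi : V -> V) (z : V) (t : 'M[K]_n)
  : 'M[K]_n := tmap (brg z) phi t + tmap phi (brg z) t.

(* Delta : <Delta x, a (x) b> = <x, [a,b]_{g^*}>, i.e. on the basis
   Delta x = \sum_{i,j} <x,[e_i,e_j]_{g^*}> e_i (x) e_j *)
Definition Delta (brs : V -> V -> V) (x : V) : 'M[K]_n :=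
  \matrix_(i, j) pairing x (brs (ev i) (ev j)).

Definition HomLieBialgebra (brg : V -> V -> V) (phi : V -> V)
    (brs : V -> V -> V) : Prop :=
  [/\ HomLie brg phi, weakly_involutive brg phi,
      HomLie brs (dualmap phi), weakly_involutive brs (dualmap phi) &
      forall x y : V, Delta brs (brg x y)
        = adT brg phi (phi x) (Delta brs y) - adT brg phi (phi y) (Delta brs x)].

(* double bracket on g (+) g^*, elements (x, a) standing for x + a *)
Definition brd (brg : V -> V -> V) (phi : V -> V) (brs : V -> V -> V)
    (u v : V * V) : V * V :=
  let (x, a) := u in let (y, b) := v in
  (brg x y + coads brs phi a y - coads brs phi b x,
   coadg brg phi x b - coadg brg phi y a + brs a b).

Definition phid (phi : V -> V) (u : V * V) : V * V :=
  (phi u.1, dualmap phi u.2).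

End Bialg.

(* Main.v *)
Require Import Defs.
From HB Require Import structures.
From mathcomp Require Import all_boot all_order all_algebra.
From mathcomp Require Import ring.
Set Implicit Arguments. Unset Strict Implicit. Unset Printing Implicit Defensive.
Import GRing.Theory.
Local Open Scope ring_scope.

Section Basic.
Variables (K : fieldType) (n : nat).
Local Notation V := 'rV[K]_n.
Implicit Types (x y z a b : V).

Definition islin (f : V -> V) := forall (c : K) (x y : V), f (c *: x + y) = c *: f x + f y.

Lemma lin0 f : islin f -> f 0 = 0.
Proof.
move=> Hf; have := Hf 1 0 0; rewrite !scale1r addr0 => H.
by apply: (@addrI _ (f 0)); rewrite addr0 -H.
Qed.
Lemma linD f : islin f -> forall x y, f (x + y) = f x + f y.
Proof. by move=> Hf x y; have := Hf 1 x y; rewrite !scale1r. Qed.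
Lemma linZ f : islin f -> forall c x, f (c *: x) = c *: f x.
Proof. by move=> Hf c x; rewrite -[c *: x]addr0 Hf lin0 // addr0. Qed.
Lemma linN f : islin f -> forall x, f (- x) = - f x.
Proof. by move=> Hf x; rewrite -scaleN1r linZ // scaleN1r. Qed.
Lemma linB f : islin f -> forall x y, f (x - y) = f x - f y.
Proof. by move=> Hf x y; rewrite linD // linN. Qed.
Lemma lin_sum f : islin f -> forall I r (P : pred I) (F : I -> V),
  f (\sum_(i <- r | P i) F i) = \sum_(i <- r | P i) f (F i).
Proof.
move=> Hf I r P F; apply: (big_morph f); [exact: linD | exact: lin0].
Qed.

Lemma pairingC x a : pairing x a = pairing a x.
Proof. by rewrite /pairing; apply: eq_bigr => i _; rewrite mulrC. Qed.
Lemma pairingDl x y a : pairing (x + y) a = pairing x a + pairing y a.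
Proof. by rewrite /pairing -big_split; apply: eq_bigr => i _; rewrite mxE mulrDl. Qed.
Lemma pairingZl c x a : pairing (c *: x) a = c * pairing x a.
Proof. by rewrite /pairing mulr_sumr; apply: eq_bigr => i _; rewrite mxE mulrA. Qed.
Lemma pairingNl x a : pairing (- x) a = - pairing x a.
Proof. by rewrite -scaleN1r pairingZl mulN1r. Qed.
Lemma pairingBl x y a : pairing (x - y) a = pairing x a - pairing y a.
Proof. by rewrite pairingDl pairingNl. Qed.
Lemma pairing0l a : pairing 0 a = 0.
Proof. by rewrite -(scale0r 0) pairingZl mul0r. Qed.
Lemma pairingDr x a b : pairing x (a + b) = pairing x a + pairing x b.
Proof. by rewrite !(pairingC x) pairingDl. Qed.
Lemma pairingZr c x a : pairing x (c *: a) = c * pairing x a.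
Proof. by rewrite !(pairingC x) pairingZl. Qed.
Lemma pairingNr x a : pairing x (- a) = - pairing x a.
Proof. by rewrite !(pairingC x) pairingNl. Qed.
Lemma pairingBr x a b : pairing x (a - b) = pairing x a - pairing x b.
Proof. by rewrite !(pairingC x) pairingBl. Qed.
Lemma pairing0r a : pairing a 0 = 0.
Proof. by rewrite pairingC pairing0l. Qed.
Lemma pairing_suml I r (P : pred I) (F : I -> V) a :
  pairing (\sum_(i <- r | P i) F i) a = \sum_(i <- r | P i) pairing (F i) a.
Proof. apply: (big_morph (fun v : V => pairing v a)); [move=> u v; exact: pairingDl | exact: pairing0l]. Qed.

Lemma pairing_evr x j : pairing x (ev K j) = x 0 j.
Proof.
rewrite /pairing (bigD1 j) //= big1 => [|i /negPf ne]; rewrite !mxE ?eqxx ?ne ?mulr0 //.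
by rewrite mulr1 addr0.
Qed.

Lemma vec_eq (u v : V) : (forall b, pairing u b = pairing v b) -> u = v.
Proof. move=> H; apply/rowP => j; rewrite -!pairing_evr; exact: H. Qed.

Lemma dual_adj f : islin f -> forall x a, pairing (f x) a = pairing x (dualmap f a).
Proof.
move=> Hf x a; rewrite {1}(row_sum_delta x) lin_sum // pairing_suml /pairing.
by apply: eq_bigr => j _; rewrite mxE linZ // -pairingZl.
Qed.

Lemma pairing_sumr I r (P : pred I) (F : I -> V) x :
  pairing x (\sum_(i <- r | P i) F i) = \sum_(i <- r | P i) pairing x (F i).
Proof. by rewrite pairingC pairing_suml; apply: eq_bigr => i _; rewrite pairingC. Qed.

Definition mpair (t : 'M[K]_n) a b := \sum_i \sum_j t i j * (a 0 i * b 0 j).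

Lemma mpairD t1 t2 a b : mpair (t1 + t2) a b = mpair t1 a b + mpair t2 a b.
Proof.
rewrite /mpair -big_split; apply: eq_bigr => i _; rewrite -big_split.
by apply: eq_bigr => j _; rewrite mxE mulrDl.
Qed.
Lemma mpairZ (c : K) (t : 'M[K]_n) a b : mpair (c *: t) a b = c * mpair t a b.
Proof.
rewrite /mpair mulr_sumr; apply: eq_bigr => i _; rewrite mulr_sumr.
by apply: eq_bigr => j _; rewrite mxE -mulrA.
Qed.
Lemma mpair0 a b : mpair 0 a b = 0.
Proof. by rewrite -(scale0r 0) mpairZ mul0r. Qed.
Lemma mpairN t a b : mpair (- t) a b = - mpair t a b.
Proof. by rewrite -scaleN1r mpairZ mulN1r. Qed.
Lemma mpairB t1 t2 a b : mpair (t1 - t2) a b = mpair t1 a b - mpair t2 a b.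
Proof. by rewrite mpairD mpairN. Qed.
Lemma mpair_sum I r (P : pred I) (F : I -> 'M[K]_n) a b :
  mpair (\sum_(i <- r | P i) F i) a b = \sum_(i <- r | P i) mpair (F i) a b.
Proof.
apply: (big_morph (fun t => mpair t a b)); [move=> u v; exact: mpairD | exact: mpair0].
Qed.
Lemma mpair_tens u v a b : mpair (tens u v) a b = pairing u a * pairing v b.
Proof.
rewrite /mpair /pairing big_distrl; apply: eq_bigr => i _.
rewrite big_distrr; apply: eq_bigr => j _ /=.
rewrite !mxE big_ord1 !mxE; ring.
Qed.
Lemma mpair_tmap f h t a b :
  mpair (tmap f h t) a b = mpair t (dualmap f a) (dualmap h b).
Proof.
rewrite /tmap mpair_sum; apply: eq_bigr => i _.
rewrite mpair_sum; apply: eq_bigr => j _.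
by rewrite mpairZ mpair_tens !mxE.
Qed.

Lemma mpair_Delta (brs : V -> V -> V) :
  (forall b, islin (brs^~ b)) -> (forall a, islin (brs a)) ->
  forall x a b, mpair (Delta brs x) a b = pairing x (brs a b).
Proof.
move=> H1 H2 x a b.
rewrite {2}(row_sum_delta a) (lin_sum (H1 b)) pairing_sumr /mpair.
apply: eq_bigr => i _; rewrite (linZ (H1 b)) pairingZr.
rewrite {2}(row_sum_delta b) (lin_sum (H2 _)) pairing_sumr mulr_sumr.
apply: eq_bigr => j _; rewrite (linZ (H2 _)) pairingZr mxE.
rewrite /ev; ring.
Qed.

End Basic.

Section Main.
Variables (K : fieldType) (n : nat).
Local Notation V := 'rV[K]_n.
Implicit Types (x y z a b c t : V).
Variables (brg : V -> V -> V) (phi : V -> V) (brs : V -> V -> V).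
Hypothesis HB : HomLieBialgebra brg phi brs.
Local Notation psi := (dualmap phi).

Lemma HLg : HomLie brg phi. Proof. by case: HB. Qed.
Lemma HLs : HomLie brs psi. Proof. by case: HB. Qed.
Lemma Hgw x y : brg (phi (phi x)) y = brg x y. Proof. by case: HB. Qed.
Lemma Hsw x y : brs (psi (psi x)) y = brs x y. Proof. by case: HB. Qed.
Lemma Hcomp x y : Delta brs (brg x y)
        = adT brg phi (phi x) (Delta brs y) - adT brg phi (phi y) (Delta brs x).
Proof. by case: HB. Qed.

Lemma brg_l y : islin (brg^~ y). Proof. by case: HLg => H *; move=> c u v; exact: H. Qed.
Lemma brg_r y : islin (brg y). Proof. by case: HLg => _ H *; move=> c u v; exact: H. Qed.
Lemma brgC x y : brg x y = - brg y x. Proof. by case: HLg. Qed.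
Lemma phi_l : islin phi. Proof. by case: HLg. Qed.
Lemma phiM x y : phi (brg x y) = brg (phi x) (phi y). Proof. by case: HLg => _ _ _ _ []. Qed.
Lemma gJ x y z : brg (phi x) (brg y z) + brg (phi y) (brg z x) + brg (phi z) (brg x y) = 0.
Proof. by case: HLg => _ _ _ _ []. Qed.
Lemma brs_l y : islin (brs^~ y). Proof. by case: HLs => H *; move=> c u v; exact: H. Qed.
Lemma brs_r y : islin (brs y). Proof. by case: HLs => _ H *; move=> c u v; exact: H. Qed.
Lemma brsC x y : brs x y = - brs y x. Proof. by case: HLs. Qed.
Lemma psi_l : islin psi. Proof. by case: HLs. Qed.
Lemma psiM x y : psi (brs x y) = brs (psi x) (psi y). Proof. by case: HLs => _ _ _ _ []. Qed.
Lemma sJ x y z : brs (psi x) (brs y z) + brs (psi y) (brs z x) + brs (psi z) (brs x y) = 0.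
Proof. by case: HLs => _ _ _ _ []. Qed.

Lemma brgDl x y z : brg (x + y) z = brg x z + brg y z. Proof. exact: (linD (brg_l z)). Qed.
Lemma brgBl x y z : brg (x - y) z = brg x z - brg y z. Proof. exact: (linB (brg_l z)). Qed.
Lemma brgNl x z : brg (- x) z = - brg x z. Proof. exact: (linN (brg_l z)). Qed.
Lemma brgZl (k : K) x z : brg (k *: x) z = k *: brg x z. Proof. exact: (linZ (brg_l z)). Qed.
Lemma brg0l z : brg 0 z = 0. Proof. exact: (lin0 (brg_l z)). Qed.
Lemma brgDr x y z : brg z (x + y) = brg z x + brg z y. Proof. exact: (linD (brg_r z)). Qed.
Lemma brgBr x y z : brg z (x - y) = brg z x - brg z y. Proof. exact: (linB (brg_r z)). Qed.
Lemma brgNr x z : brg z (- x) = - brg z x. Proof. exact: (linN (brg_r z)). Qed.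
Lemma brgZr (k : K) x z : brg z (k *: x) = k *: brg z x. Proof. exact: (linZ (brg_r z)). Qed.
Lemma brg0r z : brg z 0 = 0. Proof. exact: (lin0 (brg_r z)). Qed.
Lemma brsDl x y z : brs (x + y) z = brs x z + brs y z. Proof. exact: (linD (brs_l z)). Qed.
Lemma brsBl x y z : brs (x - y) z = brs x z - brs y z. Proof. exact: (linB (brs_l z)). Qed.
Lemma brsNl x z : brs (- x) z = - brs x z. Proof. exact: (linN (brs_l z)). Qed.
Lemma brsZl (k : K) x z : brs (k *: x) z = k *: brs x z. Proof. exact: (linZ (brs_l z)). Qed.
Lemma brs0l z : brs 0 z = 0. Proof. exact: (lin0 (brs_l z)). Qed.
Lemma brsDr x y z : brs z (x + y) = brs z x + brs z y. Proof. exact: (linD (brs_r z)). Qed.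
Lemma brsBr x y z : brs z (x - y) = brs z x - brs z y. Proof. exact: (linB (brs_r z)). Qed.
Lemma brsNr x z : brs z (- x) = - brs z x. Proof. exact: (linN (brs_r z)). Qed.
Lemma brsZr (k : K) x z : brs z (k *: x) = k *: brs z x. Proof. exact: (linZ (brs_r z)). Qed.
Lemma brs0r z : brs z 0 = 0. Proof. exact: (lin0 (brs_r z)). Qed.
Lemma phiD x y : phi (x + y) = phi x + phi y. Proof. exact: (linD phi_l). Qed.
Lemma phiB x y : phi (x - y) = phi x - phi y. Proof. exact: (linB phi_l). Qed.
Lemma phiN x : phi (- x) = - phi x. Proof. exact: (linN phi_l). Qed.
Lemma phiZ (k : K) x : phi (k *: x) = k *: phi x. Proof. exact: (linZ phi_l). Qed.
Lemma phi0 : phi 0 = 0. Proof. exact: (lin0 phi_l). Qed.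
Lemma psiD x y : psi (x + y) = psi x + psi y. Proof. exact: (linD psi_l). Qed.
Lemma psiB x y : psi (x - y) = psi x - psi y. Proof. exact: (linB psi_l). Qed.
Lemma psiN x : psi (- x) = - psi x. Proof. exact: (linN psi_l). Qed.
Lemma psiZ (k : K) x : psi (k *: x) = k *: psi x. Proof. exact: (linZ psi_l). Qed.
Lemma psi0 : psi 0 = 0. Proof. exact: (lin0 psi_l). Qed.

Lemma Pphi x a : pairing (phi x) a = pairing x (psi a).
Proof. exact: dual_adj phi_l x a. Qed.

Lemma Pcoadg x y a : pairing y (coadg brg phi x a) = - pairing (brg (phi x) y) a.
Proof.
have -> : coadg brg phi x a = - dualmap (brg (phi x)) a.
  by apply/rowP => j; rewrite !mxE.
by rewrite pairingNr -dual_adj //; exact: brg_r.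
Qed.

Lemma Pcoads a x b : pairing (coads brs phi a x) b = - pairing x (brs (psi a) b).
Proof.
have -> : coads brs phi a x = - dualmap (brs (psi a)) x.
  by apply/rowP => j; rewrite !mxE pairingC.
by rewrite pairingNl pairingC -(dual_adj (brs_r _)) pairingC.
Qed.

Lemma dual_brg_phi x a : dualmap (brg (phi x)) a = - coadg brg phi x a.
Proof. by apply/rowP => j; rewrite !mxE opprK. Qed.

Lemma Pcomp x y a b : pairing (brg x y) (brs a b) =
  - pairing y (brs (coadg brg phi x a) (psi b)) - pairing y (brs (psi a) (coadg brg phi x b))
  + pairing x (brs (coadg brg phi y a) (psi b)) + pairing x (brs (psi a) (coadg brg phi y b)).
Proof.
have := congr1 (fun m : 'M[K]_n => mpair m a b) (Hcomp x y).
rewrite /= mpairB /adT !mpairD !mpair_tmap !(mpair_Delta brs_l brs_r).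
rewrite !dual_brg_phi !brsNl !brsNr !pairingNr => ->; ring.
Qed.

Lemma psi2M a b : psi (psi (brs a b)) = brs a b.
Proof. by rewrite !psiM Hsw brsC Hsw -brsC. Qed.
Lemma phi2M x y : phi (phi (brg x y)) = brg x y.
Proof. by rewrite !phiM Hgw brgC Hgw -brgC. Qed.

Local Notation bd := (brd brg phi brs).
Local Notation pd := (phid phi).
Lemma vec_eq' (u v : V) : (forall y, pairing y u = pairing y v) -> u = v.
Proof. by move=> H; apply: vec_eq => b; rewrite pairingC H pairingC. Qed.

Lemma coads0l x : coads brs phi 0 x = 0.
Proof. by apply: vec_eq => b; rewrite Pcoads psi0 brs0l pairing0r pairing0l oppr0. Qed.
Lemma coads0r a : coads brs phi a 0 = 0.
Proof. by apply: vec_eq => b; rewrite Pcoads !pairing0l oppr0. Qed.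
Lemma coadg0l a : coadg brg phi 0 a = 0.
Proof. by apply: vec_eq' => y; rewrite Pcoadg phi0 brg0l pairing0r pairing0l oppr0. Qed.
Lemma coadg0r x : coadg brg phi x 0 = 0.
Proof. by apply: vec_eq' => y; rewrite Pcoadg !pairing0r oppr0. Qed.

Lemma Pbrg_phi x w b : pairing (brg (phi x) w) b = - pairing w (coadg brg phi x b).
Proof. by rewrite Pcoadg opprK. Qed.
Lemma Pphi_brs x u b : pairing (phi x) (brs (psi u) b) = pairing x (brs u (psi b)).
Proof. by rewrite Pphi psiM Hsw. Qed.
Lemma gJ' x y z : brg (phi z) (brg x y) = - brg (phi x) (brg y z) - brg (phi y) (brg z x).
Proof. by move: (gJ x y z) => /eqP; rewrite addrC addr_eq0 => /eqP ->; rewrite opprD. Qed.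

Lemma sJ' x y z : brs (psi z) (brs x y) = - brs (psi x) (brs y z) - brs (psi y) (brs z x).
Proof. by move: (sJ x y z) => /eqP; rewrite addrC addr_eq0 => /eqP ->; rewrite opprD. Qed.
Lemma Pbrg_phi_psi w t b : pairing (brg (phi w) t) (psi b) = pairing w (coadg brg phi t b).
Proof. by rewrite -Pphi phiM Hgw brgC pairingNl Pbrg_phi opprK. Qed.

Ltac simp := rewrite ?(pairingDl, pairingDr, pairingBl, pairingBr, pairingNl, pairingNr,
  pairingZl, pairingZr, pairing0l, pairing0r, Pcoads, Pcoadg,
  brgDl, brgBl, brgNl, brgZl, brg0l, brgDr, brgBr, brgNr, brgZr, brg0r,
  brsDl, brsBl, brsNl, brsZl, brs0l, brsDr, brsBr, brsNr, brsZr, brs0r,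
  phiD, phiB, phiN, phiZ, phi0, psiD, psiB, psiN, psiZ, psi0,
  coads0l, coads0r, coadg0l, coadg0r, Hgw, Hsw, oppr0, opprK, addr0, add0r, subr0, sub0r).

Definition Jac (u v w : V * V) := bd (pd u) (bd v w) + bd (pd v) (bd w u) + bd (pd w) (bd u v).

Lemma pair_eq0 (A B : V) : A = 0 -> B = 0 -> (A, B) = 0 :> V * V.
Proof. by move=> -> ->. Qed.

Lemma J_ggs x y c : Jac (x, 0) (y, 0) (0, c) = 0.
Proof.
rewrite /Jac /brd /phid /=; apply: pair_eq0; [apply: vec_eq => t|apply: vec_eq' => t]; simp.
  by rewrite !Pbrg_phi !Pcoads !Pphi_brs Pcomp; ring.
rewrite -Pphi phiM Hgw (brgC (brg x y)) (gJ' x y t) (brgC t x); simp; ring.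
Qed.

Lemma J_ssg b c x : Jac (0, b) (0, c) (x, 0) = 0.
Proof.
rewrite /Jac /brd /phid /=; apply: pair_eq0; [apply: vec_eq => t|apply: vec_eq' => t]; simp.
  by rewrite Pphi_brs (brsC (brs b c)) (sJ' b c t) (brsC t b); simp; ring.
rewrite !Pbrg_phi_psi !Pcoads Pcomp (brsC (coadg brg phi x b)) (brsC (coadg brg phi t b)) !pairingNr; ring.
Qed.

Lemma J_ggg x y z : Jac (x, 0) (y, 0) (z, 0) = 0.
Proof.
rewrite /Jac /brd /phid /=; apply: pair_eq0; [apply: vec_eq => t|apply: vec_eq' => t]; simp => //.
by rewrite -!pairingDl gJ pairing0l.
Qed.
Lemma J_sss a b c : Jac (0, a) (0, b) (0, c) = 0.
Proof.
rewrite /Jac /brd /phid /=; apply: pair_eq0; [apply: vec_eq => t|apply: vec_eq' => t]; simp => //.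
by rewrite -!pairingDr sJ pairing0r.
Qed.

Lemma pair_eq (A B C D : V) : A = C -> B = D -> (A, B) = (C, D).
Proof. by move=> -> ->. Qed.

Lemma pairZD (k : K) (A B C D : V) : k *: ((A, B) : V * V) + (C, D) = (k *: A + C, k *: B + D).
Proof. by []. Qed.
Lemma pairD (A B C D : V) : ((A, B) : V * V) + (C, D) = (A + C, B + D).
Proof. by []. Qed.
Lemma pairN (A B : V) : - ((A, B) : V * V) = (- A, - B).
Proof. by []. Qed.

Lemma bd_l (k : K) (u v w : V * V) : bd (k *: u + v) w = k *: bd u w + bd v w.
Proof.
case: u => x a; case: v => y b; case: w => z c; rewrite /brd /= pairZD.
by apply: pair_eq; [apply: vec_eq => t|apply: vec_eq' => t]; simp; ring.
Qed.
Lemma bd_r (k : K) (u v w : V * V) : bd w (k *: u + v) = k *: bd w u + bd w v.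
Proof.
case: u => x a; case: v => y b; case: w => z c; rewrite /brd /= pairZD.
by apply: pair_eq; [apply: vec_eq => t|apply: vec_eq' => t]; simp; ring.
Qed.
Lemma bd_skew (u v : V * V) : bd u v = - bd v u.
Proof.
case: u => x a; case: v => y b; rewrite /brd /= pairN.
apply: pair_eq; [apply: vec_eq => t|apply: vec_eq' => t]; simp;
  rewrite ?(brgC y x) ?(brsC b a); simp; ring.
Qed.
Lemma pd_lin (k : K) (u v : V * V) : pd (k *: u + v) = k *: pd u + pd v.
Proof.
case: u => x a; case: v => y b; rewrite /phid /= pairZD.
by rewrite phiD phiZ psiD psiZ.
Qed.
Lemma pd_mul (u v : V * V) : pd (bd u v) = bd (pd u) (pd v).
Proof.
case: u => x a; case: v => y b; rewrite /brd /phid /=.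
apply: pair_eq; [apply: vec_eq => t|apply: vec_eq' => t].
  by rewrite -phiM; simp; rewrite !Pphi; simp; rewrite ?psiM; simp.
by rewrite -psiM; simp; rewrite -!Pphi; simp; rewrite ?phiM; simp.
Qed.
Lemma bd_wi (u v : V * V) : bd (pd (pd u)) v = bd u v.
Proof.
case: u => x a; case: v => y b; rewrite /brd /phid /=.
apply: pair_eq; [apply: vec_eq => t|apply: vec_eq' => t]; simp => //.
  by rewrite !Pphi psi2M.
by rewrite -!Pphi phi2M.
Qed.

Lemma bdDl (u v w : V * V) : bd (u + v) w = bd u w + bd v w.
Proof. by have := bd_l 1 u v w; rewrite !scale1r. Qed.
Lemma bdDr (u v w : V * V) : bd w (u + v) = bd w u + bd w v.
Proof. by have := bd_r 1 u v w; rewrite !scale1r. Qed.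
Lemma pdD (u v : V * V) : pd (u + v) = pd u + pd v.
Proof. by have := pd_lin 1 u v; rewrite !scale1r. Qed.

Lemma ac6 (W : zmodType) (a1 a2 b1 b2 c1 c2 : W) :
  (a1 + a2) + (b1 + b2) + (c1 + c2) = (a1 + b1 + c1) + (a2 + b2 + c2).
Proof. by rewrite (addrACA a1 a2 b1 b2) (addrACA (a1 + b1) (a2 + b2) c1 c2). Qed.

Lemma Jac_cyc u v w : Jac u v w = Jac v w u.
Proof. by rewrite /Jac -addrA addrC. Qed.
Lemma Jac_addl u1 u2 v w : Jac (u1 + u2) v w = Jac u1 v w + Jac u2 v w.
Proof. by rewrite /Jac pdD !bdDl !bdDr ac6. Qed.
Lemma Jac_addm u v1 v2 w : Jac u (v1 + v2) w = Jac u v1 w + Jac u v2 w.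
Proof. by rewrite [LHS]Jac_cyc Jac_addl (Jac_cyc u v1 w) (Jac_cyc u v2 w). Qed.
Lemma Jac_addr u v w1 w2 : Jac u v (w1 + w2) = Jac u v w1 + Jac u v w2.
Proof. by rewrite -(Jac_cyc (w1 + w2) u v) Jac_addl (Jac_cyc w1 u v) (Jac_cyc w2 u v). Qed.

Lemma J_gsg x b z : Jac (x, 0) (0, b) (z, 0) = 0.
Proof. by rewrite Jac_cyc Jac_cyc J_ggs. Qed.
Lemma J_sgg b y z : Jac (0, b) (y, 0) (z, 0) = 0.
Proof. by rewrite Jac_cyc J_ggs. Qed.
Lemma J_sgs b y c : Jac (0, b) (y, 0) (0, c) = 0.
Proof. by rewrite Jac_cyc Jac_cyc J_ssg. Qed.
Lemma J_gss x b c : Jac (x, 0) (0, b) (0, c) = 0.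
Proof. by rewrite Jac_cyc J_ssg. Qed.

Lemma Jac0 u v w : Jac u v w = 0.
Proof.
case: u => x a; case: v => y b; case: w => z c.
have E : forall p q : V, ((p, q) : V * V) = (p, 0) + (0, q) by move=> p q; rewrite pairD addr0 add0r.
rewrite (E x a) (E y b) (E z c) !Jac_addl !Jac_addm !Jac_addr.
by rewrite J_ggg J_ggs J_gsg J_gss J_sgg J_sgs J_ssg J_sss !addr0.
Qed.

Lemma double_ok : HomLie (V := (V * V)%type) bd pd /\ weakly_involutive (V := (V * V)%type) bd pd.
Proof.
split; last by move=> u v; exact: bd_wi.
split.
- by move=> k u v w; exact: bd_l.
- by move=> k u v w; exact: bd_r.
- by move=> u v; exact: bd_skew.
- by move=> k u v; exact: pd_lin.
split; first by move=> u v; exact: pd_mul.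
by move=> u v w; exact: Jac0.
Qed.

End Main.

Theorem corollary3p10 (K : fieldType) (n : nat)
    (brg : 'rV[K]_n -> 'rV[K]_n -> 'rV[K]_n) (phi : 'rV[K]_n -> 'rV[K]_n)
    (brs : 'rV[K]_n -> 'rV[K]_n -> 'rV[K]_n) :
  HomLieBialgebra brg phi brs ->
  HomLie (V := ('rV[K]_n * 'rV[K]_n)%type) (brd brg phi brs) (phid phi) /\
  weakly_involutive (V := ('rV[K]_n * 'rV[K]_n)%type) (brd brg phi brs) (phid phi).
Proof. move=> HB; exact: double_ok. Qed.
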